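(* Let $G$ be a graph and $\overline{G}$ its $K_{n,n}$-augmentation. Then $G$ is circulant if and only if $\overline{G}$ is circulant.
   Context: A graph on $n$ vertices is circulant if its vertices can be numbered $v_0,\dots,v_{n-1}$ so that, for all $x,z,d$, whenever $v_x$ and $v_{(x+d)\bmod n}$ are adjacent, $v_z$ and $v_{(z+d)\bmod n}$ are adjacent. For a graph $G=(V,E)$ with $n$ vertices, a clone of $G$ is a graph $G'=(V',E')$ isomorphic to $G$ with $V\cap V'=\emptyset$; the $K_{n,n}$-augmentation of $G$ is the graph $\overline{G}$ with vertex set $V\cup V'$ and edge set $E\cup E'\cup\{\{v,w\}: v\in V, w\in V'\}$ (the join of $G$ with a clone). *)

(* Defs.v *)
From mathcomp Require Import all_boot.
Set Implicit Arguments. Unset Strict Implicit. Unset Printing Implicit Defensive.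

Definition ord_addmod (n : nat) (x d : 'I_n) : 'I_n :=
  Ordinal (ltn_pmod (x + d) (leq_ltn_trans (leq0n x) (ltn_ord x))).

Definition circulant (T : finType) (e : rel T) : Prop :=
  exists v : 'I_#|T| -> T, bijective v /\
    forall x z d : 'I_#|T|,
      e (v x) (v (ord_addmod x d)) -> e (v z) (v (ord_addmod z d)).

(* K_{n,n}-augmentation: vertex set V ⊔ V' (V' a disjoint clone of V, here
   the right summand), edges E ∪ E' ∪ {all pairs between V and V'}. *)
Definition knn_aug (T : finType) (e : rel T) : rel (T + T)%type :=
  fun u w => match u, w with
             | inl a, inl b => e a b
             | inr a, inr b => e a b
             | _, _ => true
             end.

(* Main.v *)
Require Import Defs.
From mathcomp Require Import all_boot zify.
Set Implicit Arguments. Unset Strict Implicit. Unset Printing Implicit Defensive.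

Definition circN (T : finType) (e : rel T) (N : nat) (f : nat -> T) : Prop :=
  [/\ forall x, f (x + N) = f x,
      forall t, exists2 x, x < N & f x = t,
      forall x y, x < N -> y < N -> f x = f y -> x = y
    & forall x d, e (f x) (f (x + d)) = e (f 0) (f d)].

Lemma perM (A : Type) (N : nat) (f : nat -> A) :
  (forall x, f (x + N) = f x) -> forall r q, f (r + q * N) = f r.
Proof.
move=> H r; elim=> [|q IH]; first by rewrite mul0n addn0.
by rewrite mulSn (addnC N) addnA H.
Qed.

Lemma perMod (A : Type) (N : nat) (f : nat -> A) :
  (forall x, f (x + N) = f x) -> forall y, f (y %% N) = f y.
Proof.
move=> H y; rewrite {2}(divn_eq y N) addnC.
by rewrite perM.
Qed.

Lemma circN_card (T : finType) (e : rel T) N f : circN e N f -> N = #|T|.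
Proof.
case=> Hp Hs Hi _.
pose v := fun i : 'I_N => f i.
have vinj : injective v.
  by move=> i j /Hi => /(_ (ltn_ord i) (ltn_ord j)) /val_inj.
apply/eqP; rewrite eqn_leq.
have := @leq_card _ _ v vinj; rewrite card_ord => -> /=.
have -> : N = #|codom v| by rewrite (@card_codom _ _ v vinj) card_ord.
apply: subset_leq_card; apply/subsetP => t _.
have [x xN <-] := Hs t.
by apply/codomP; exists (Ordinal xN).
Qed.

Lemma card0_circ (T : finType) (e : rel T) : #|T| = 0 -> circulant e.
Proof.
move=> H0.
have F : 'I_#|T| -> False by case=> i; rewrite H0.
have G : T -> False.
  move=> t; have : 0 < #|T| by apply/card_gt0P; exists t.
  by rewrite H0.
exists (fun i => match F i with end); split.
  by exists (fun t => match G t with end) => [i|t]; [case: (F i)|case: (G t)].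
by move=> x; case: (F x).
Qed.

Lemma N_to_circ (T : finType) (e : rel T) N f : circN e N f -> circulant e.
Proof.
move=> H; have EN := circN_card H; subst N.
case: H => Hp Hs Hi Hsh.
have vinj : injective (fun i : 'I_#|T| => f i).
  by move=> i j /Hi => /(_ (ltn_ord i) (ltn_ord j)) /val_inj.
exists (fun i : 'I_#|T| => f i); split.
  by apply: inj_card_bij vinj _; rewrite card_ord.
move=> x z d /=.
by rewrite !perMod // Hsh -(Hsh z).
Qed.

Lemma circ_to_N (T : finType) (e : rel T) : 0 < #|T| -> circulant e ->
  exists f, circN e #|T| f.
Proof.
move=> Np [v [[w vw wv] Hc]].
pose f := fun x => v (Ordinal (ltn_pmod x Np)).
have Hsh : forall x d, e (f x) (f (x + d)) = e (f 0) (f d).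
  move=> x d.
  have E1 : forall y, Ordinal (ltn_pmod (y + d) Np) =
      ord_addmod (Ordinal (ltn_pmod y Np)) (Ordinal (ltn_pmod d Np)).
    by move=> y; apply: val_inj; rewrite /= modnDm.
  have E2 : Ordinal (ltn_pmod d Np) =
      ord_addmod (Ordinal (ltn_pmod 0 Np)) (Ordinal (ltn_pmod d Np)).
    by apply: val_inj; rewrite /= modnDm add0n.
  rewrite /f [in RHS]E2 (E1 x).
  by apply/idP/idP; apply: Hc.
exists f; split => //.
- by move=> x; rewrite /f; congr v; apply: val_inj; rewrite /= modnDr.
- move=> t; exists (w t) => //; rewrite /f -{3}(wv t); congr v.
  by apply: val_inj; rewrite /= modn_small.
- move=> x y xN yN /(bij_inj (Bijective vw wv)) /(congr1 val) /=.
  by rewrite !modn_small.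
Qed.

Lemma fwd (T : finType) (e : rel T) N f : circN e N f ->
  exists F, circN (knn_aug e) (N + N) F.
Proof.
case=> Hp Hs Hi Hsh.
pose F := fun y => if odd y then inr (f y./2) else @inl T T (f y./2).
have h2 : forall y z, (y + z.*2)./2 = y./2 + z.
  by move=> y z; rewrite halfD odd_double andbF add0n doubleK.
exists F; split.
- move=> x; rewrite /F addnn oddD odd_double addbF h2 Hp //.
- case=> t; have [x xN <-] := Hs t.
  + exists x.*2; first by rewrite addnn ltn_double.
    by rewrite /F odd_double doubleK.
  + exists x.*2.+1; first by rewrite addnn ltn_Sdouble.
    by rewrite /F /= odd_double /= uphalf_double.
- move=> x y xN yN; rewrite /F.
  have hx : x./2 < N by rewrite -ltn_double -addnn; move: xN (odd_double_half x); case: (odd x) => /=; lia.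
  have hy : y./2 < N by rewrite -ltn_double -addnn; move: yN (odd_double_half y); case: (odd y) => /=; lia.
  move=> E.
  have Eo : odd x = odd y by move: E; case: (odd x); case: (odd y).
  have E2 : x./2 = y./2.
    by apply: Hi => //; move: E; rewrite Eo; case: (odd y) => -[].
  by rewrite -(odd_double_half x) -(odd_double_half y) Eo E2.
- move=> x d; rewrite /F /= oddD.
  case Od: (odd d).
  + by case: (odd x).
  + have -> : (x + d)./2 = x./2 + d./2 by rewrite halfD Od andbF.
    by case: (odd x) => /=; rewrite Hsh.
Qed.

Lemma bwd (T : finType) (e : rel T) M F : 0 < M -> circN (knn_aug e) M F ->
  exists N f, circN e N f.
Proof.
move=> Mp [Hp Hs Hi Hsh].
have t0 : T by case: (F 0) => t.
pose side y := if F y is inl _ then true else false.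
pose E d := knn_aug e (F 0) (F d).
have sideM : forall y, side (y %% M) = side y by move=> y; rewrite /side perMod.
have knn_gen : forall x y, knn_aug e (F x) (F y) = E (y + (M - x %% M)).
  move=> x y; rewrite /E -(Hsh x); congr (knn_aug e _ _).
  rewrite -(perM Hp y (x %/ M).+1); congr F.
  have := ltn_pmod x Mp; have := divn_eq x M; lia.
have same_side : forall x y, knn_aug e (F x) (F y) = false -> side x = side y.
  by move=> x y; rewrite /side; case: (F x); case: (F y).
pose per p := forall x, side (x + p) = side x.
pose perb p := all (fun x => side (x + p) == side x) (iota 0 M).
have perP : forall p, perb p -> per p.
  move=> p /allP H x.
  rewrite -sideM -modnDml sideM -[RHS]sideM.
  by apply/eqP/H; rewrite mem_iota add0n ltn_pmod.
have perbM : perb M.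
  by apply/allP => x _; rewrite -sideM modnDr sideM.
have exP : exists p, (0 < p) && perb p by exists M; rewrite Mp perbM.
case: (ex_minnP exP) => g /andP[gp /perP perg] gmin.
have per_add : forall a b, per a -> per b -> per (a + b).
  by move=> a b Ha Hb x; rewrite addnA Hb Ha.
have per_mul : forall a q, per a -> per (q * a).
  move=> a q Ha; elim: q => [|q IH] x; first by rewrite mul0n addn0.
  by rewrite mulSn addnA IH Ha.
have per_sub : forall a b, per (a + b) -> per b -> per a.
  by move=> a b Hab Hb x; rewrite -Hb -addnA Hab.
have per_dvd : forall p, per p -> g %| p.
  move=> p Hp'.
  have Hr : per (p %% g).
    apply: (per_sub _ (p %/ g * g)); last exact: per_mul.
    by rewrite addnC -divn_eq.
  case: (posnP (p %% g)) => [H0|Hpos]; first by rewrite /dvdn H0.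
  have : g <= p %% g.
    apply: gmin; rewrite Hpos /=; apply/allP => x _; exact/eqP/Hr.
  by rewrite leqNgt ltn_pmod.
have gM : g %| M := per_dvd M (perP _ perbM).
have side_mod : forall x, side x = side (x %% g).
  by move=> x; rewrite {1}(divn_eq x g) addnC per_mul.
have knn_false_mod : forall x y, knn_aug e (F x) (F y) = false -> x %% g = y %% g.
  move=> x y H.
  have eq : x + (y + (M - x %% M)) = y + (x %/ M).+1 * M.
    have := ltn_pmod x Mp; have := divn_eq x M; lia.
  have Ed : E (y + (M - x %% M)) = false by rewrite -knn_gen.
  have : per (y + (M - x %% M)).
    by move=> z; apply/esym/same_side; rewrite Hsh.
  move/per_dvd => gd; move: gd eq; set dd := y + _.
  case/dvdnP => a -> eq.
  case/dvdnP: gM => b Hb; move: eq; rewrite Hb mulnA.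
  by move/(congr1 (modn^~ g)); rewrite addnC modnMDl addnC modnMDl.
pose c := [seq r <- iota 0 g | side r].
pose k := size c.
have memc : forall r, (r \in c) = (r < g) && side r.
  by move=> r; rewrite mem_filter mem_iota add0n leq0n /= andbC.
have uc : uniq c := filter_uniq _ (iota_uniq 0 g).
have kpos : 0 < k.
  have [x0 _ Fx0] := Hs (inl t0).
  rewrite /k -has_predT; apply/hasP; exists (x0 %% g) => //.
  by rewrite memc ltn_pmod // -side_mod /side Fx0.
have cg : forall j, j < k -> (nth 0 c j < g) && side (nth 0 c j).
  by move=> j jk; rewrite -memc mem_nth.
pose h := M %/ g.
have hg : h * g = M := divnK gM.
pose phi i := nth 0 c (i %% k) + (i %/ k) * g.
have phi_mod : forall i, phi i %% g = nth 0 c (i %% k).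
  move=> i; rewrite /phi addnC modnMDl modn_small //.
  by case/andP: (cg _ (ltn_pmod i kpos)).
have phi_div : forall i, phi i %/ g = i %/ k.
  move=> i; case/andP: (cg _ (ltn_pmod i kpos)) => Hlt _.
  by rewrite /phi addnC divnMDl // (divn_small Hlt) addn0.
have side_phi : forall i, side (phi i).
  by move=> i; rewrite side_mod phi_mod; case/andP: (cg _ (ltn_pmod i kpos)).
pose f i := if F (phi i) is inl t then t else t0.
have Fphi : forall i, F (phi i) = inl (f i).
  by move=> i; move: (side_phi i); rewrite /side /f; case: (F (phi i)).
have phi_lt : forall i, i < k * h -> phi i < M.
  move=> i ilt.
  have q1 : (i %/ k).+1 <= h by rewrite ltn_divLR // mulnC.
  have := leq_mul q1 (leqnn g).
  have : nth 0 c (i %% k) < g by case/andP: (cg _ (ltn_pmod i kpos)).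
  rewrite /phi hg; lia.
have e_phi : forall a b, e (f a) (f b) = knn_aug e (F (phi a)) (F (phi b)).
  by move=> a b; rewrite !Fphi.
exists (k * h), f; split.
- move=> x; rewrite /f.
  have -> : phi (x + k * h) = phi x + M.
    rewrite /phi (mulnC k h) (addnC x) modnMDl divnMDl // mulnDl hg; lia.
  by rewrite Hp.
- move=> t; have [x xM Fx] := Hs (inl t).
  have sx : side x by rewrite /side Fx.
  have rc : x %% g \in c by rewrite memc ltn_pmod // -side_mod.
  pose j := index (x %% g) c.
  have jk : j < k by rewrite /j index_mem.
  exists (j + x %/ g * k).
    have q1 : (x %/ g).+1 <= h by rewrite ltn_divLR // hg.
    have := leq_mul q1 (leqnn k).
    rewrite mulnC; lia.
  have Ephi : phi (j + x %/ g * k) = x.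
    rewrite /phi (addnC j) modnMDl (modn_small jk) divnMDl // (divn_small jk) addn0.
    by rewrite nth_index // addnC -divn_eq.
  have := Fphi (j + x %/ g * k).
  by rewrite Ephi Fx => -[].
- move=> x y xl yl Hf.
  have Hph : phi x = phi y.
    by apply: Hi; [exact: phi_lt|exact: phi_lt|rewrite !Fphi Hf].
  have Hm : x %% k = y %% k.
    apply/eqP; rewrite -(nth_uniq 0 (ltn_pmod x kpos) (ltn_pmod y kpos) uc).
    by rewrite -!phi_mod Hph.
  have Hd : x %/ k = y %/ k by rewrite -!phi_div Hph.
  by rewrite (divn_eq x k) (divn_eq y k) Hm Hd.
- move=> x d; rewrite !e_phi.
  case: (d %% k =P 0) => Hd.
  + have phi_shift : forall i, phi (i + d) = phi i + (d %/ k) * g.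
      move=> i; have Hd' : d = d %/ k * k by rewrite {1}(divn_eq d k) Hd addn0.
      set q := d %/ k; rewrite /phi {1 2}Hd' (addnC i) modnMDl divnMDl // mulnDl.
      lia.
    have -> : phi d = phi (0 + d) by rewrite add0n.
    by rewrite !phi_shift !Hsh.
  + have knn_true : forall i, knn_aug e (F (phi i)) (F (phi (i + d))) = true.
      move=> i; case H: (knn_aug e _ _) => //.
      move: (knn_false_mod _ _ H); rewrite !phi_mod => /eqP.
      rewrite nth_uniq ?ltn_pmod // => /eqP Hik.
      have : (i + 0 == i + d %[mod k]) by rewrite addn0 Hik.
      by rewrite eqn_modDl mod0n => /eqP H0; case: (Hd (esym H0)).
    have -> : phi d = phi (0 + d) by rewrite add0n.
    by rewrite !knn_true.
Qed.

Theorem lemma10 (T : finType) (e : rel T) :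
  symmetric e -> irreflexive e ->
  (circulant e <-> circulant (knn_aug e)).
Proof.
move=> _ _.
have [T0|Tp] := posnP #|T|.
  by split=> _; apply: card0_circ => //; rewrite card_sum T0.
split.
- move=> /(circ_to_N Tp) [f /fwd [F HF]]; exact: N_to_circ HF.
- have Mp : 0 < #|{: T + T}| by rewrite card_sum addn_gt0 Tp.
  move=> /(circ_to_N Mp) [F /(bwd Mp) [N [f Hf]]]; exact: N_to_circ Hf.
Qed.
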